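(* Let $f$ be any function of unitation on $\{0,1\}^n$, $\sigma=1$, $\kappa\in\mathbb{N}$ and $\mu\geq (n+1)\cdot\kappa$, and assume that the search points $0^n$ and $1^n$ are contained in the population of the $(\mu+1)$ EA with phenotypic clearing with clearing radius $\sigma$, niche capacity $\kappa$ and population size $\mu$ running on $f$. Then the expected time (number of generations) until all niches are found, i.e., until for every $i\in\{0,\dots,n\}$ the population contains a search point with exactly $i$ ones, is $O(\mu n)$.
   Context: A function of unitation is $f:\{0,1\}^n\to\mathbb{R}$ with $f(x)=u(|x|_1)$ for some $u:\{0,\dots,n\}\to\mathbb{R}^+$, where $|x|_1$ is the number of 1-bits of $x$; fitness values are assumed positive. Niche $i$ is the set of search points with exactly $i$ ones. The $(\mu+1)$ EA with clearing (population size $\mu$, clearing radius $\sigma$, niche capacity $\kappa$, distance function $\mathrm{d}$): $P_0$ consists of $\mu$ bit strings chosen independently and uniformly at random. In generation $t$: choose a parent $x\in P_t$ uniformly at random; create $y$ by flipping each bit of $x$ independently with probability $1/n$; let $P_t^*=P_t\cup\{y\}$; update the fitness values of $P_t^*$ by the clearing procedure: sort $P_t^*$ by decreasing fitness; for $i=1,\dots,|P_t^*|$, if the current fitness of $P[i]$ is positive, set $w:=1$ and for $j=i+1,\dots,|P_t^*|$: if the current fitness of $P[j]$ is positive and $\mathrm{d}(P[i],P[j])<\sigma$ then, if $w<\kappa$ set $w:=w+1$, else set the fitness of $P[j]$ to $0$. Individuals whose fitness is not reset are winners, the others are cleared. Then choose $z\in P_t$ with worst (cleared) fitness uniformly at random;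 if the (cleared) fitness of $y$ is at least that of $z$, set $P_{t+1}=P_t^*\setminus\{z\}$, otherwise $P_{t+1}=P_t^*\setminus\{y\}$. Phenotypic clearing uses $\mathrm{d}(x,y)=\big||x|_1-|y|_1\big|$. *)

(* Defs.v *)
From HB Require Import structures.
From mathcomp Require Import all_boot all_order all_algebra fingroup perm.
From mathcomp Require Import boolp classical_sets reals ereal topology normedtype sequences.
Set Implicit Arguments.
Unset Strict Implicit.
Unset Printing Implicit Defensive.
Import Order.TTheory GRing.Theory Num.Theory.
Local Open Scope ring_scope.

Definition bits (n : nat) := n.-tuple bool.
Definition ones n (x : bits n) : nat := count id x.
Definition hamming n (x y : bits n) : nat := (\sum_(i < n) (tnth x i != tnth y i))%N.
Definition zeros_str n : bits n := [tuple false | _ < n].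
Definition ones_str n : bits n := [tuple true | _ < n].

(** Standard bit mutation: each bit flipped independently with prob. 1/n. *)
Definition mut_prob (R : realType) n (x y : bits n) : R :=
  (n%:R^-1) ^+ hamming x y * (1 - n%:R^-1) ^+ (n - hamming x y).

(** Phenotypic distance d(x,y) = | |x|_1 - |y|_1 |. *)
Definition pheno_dist n (x y : bits n) : nat :=
  ((ones x - ones y) + (ones y - ones x))%N.

(** Populations of size mu (ordered representation of the multiset). *)
Definition pop n mu := {ffun 'I_mu -> bits n}.

Definition popstar n mu (s : pop n mu) (y : bits n) : {ffun 'I_mu.+1 -> bits n} :=
  [ffun j : 'I_mu.+1 => if unlift ord_max j is Some k then s k else y].

(** The clearing procedure, literally: inner loop over j > i. *)
Fixpoint clear_inner (R : realType) (T : Type) m (dist : T -> T -> nat)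
    (sigma kappa : nat) (Ps : 'I_m -> T) (xi : T) (js : seq 'I_m) (w : nat)
    (cur : 'I_m -> R) : 'I_m -> R :=
  match js with
  | [::] => cur
  | j :: js' =>
      if (0 < cur j) && (dist xi (Ps j) < sigma)%N then
        if (w < kappa)%N then clear_inner dist sigma kappa Ps xi js' w.+1 cur
        else clear_inner dist sigma kappa Ps xi js' w
               (fun k => if k == j then 0 else cur k)
      else clear_inner dist sigma kappa Ps xi js' w cur
  end.

Fixpoint clear_outer (R : realType) (T : Type) m (dist : T -> T -> nat)
    (sigma kappa : nat) (Ps : 'I_m -> T) (Ls : seq 'I_m) (cur : 'I_m -> R)
    : 'I_m -> R :=
  match Ls with
  | [::] => cur
  | i :: Ls' =>
      clear_outer dist sigma kappa Ps Ls'
        (if 0 < cur i then clear_inner dist sigma kappa Ps (Ps i) Ls' 1 cur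
         else cur)
  end.

(** Cleared fitness; [srt] is the sorting permutation: position k of the
    sorted list holds the individual Ps (srt k). *)
Definition cleared_fitness (R : realType) (T : Type) m (fit : T -> R)
    (dist : T -> T -> nat) (sigma kappa : nat) (srt : {perm 'I_m})
    (Ps : 'I_m -> T) : 'I_m -> R :=
  clear_outer dist sigma kappa Ps [seq srt k | k <- enum 'I_m]
    (fun j => fit (Ps j)).

(** A sorting rule: for every P*, a permutation listing P* by decreasing
    fitness (tie-breaking arbitrary). *)
Definition sorts_by_fitness (R : realType) n mu (fit : bits n -> R)
    (srt : {ffun 'I_mu.+1 -> bits n} -> {perm 'I_mu.+1}) : Prop :=
  forall (Ps : {ffun 'I_mu.+1 -> bits n}) (k k' : 'I_mu.+1),
    (k < k')%N -> fit (Ps (srt Ps k')) <= fit (Ps (srt Ps k)).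

Definition replace_at n mu (s : pop n mu) (z : 'I_mu) (y : bits n) : pop n mu :=
  [ffun k => if k == z then y else s k].

Definition ea_kernel (R : realType) n mu (fit : bits n -> R)
    (dist : bits n -> bits n -> nat) (sigma kappa : nat)
    (srt : {ffun 'I_mu.+1 -> bits n} -> {perm 'I_mu.+1})
    (s s' : pop n mu) : R :=
  \sum_(i : 'I_mu) mu%:R^-1 * \sum_(y : bits n) mut_prob R (s i) y *
    (let Ps := popstar s y in
     let cf := cleared_fitness fit dist sigma kappa (srt Ps) Ps in
     let W := [set k : 'I_mu | [forall k' : 'I_mu,
                 cf (lift ord_max k) <= cf (lift ord_max k')]] in
     \sum_(z in W) #|W|%:R^-1 *
        ((if cf (lift ord_max z) <= cf ord_max then replace_at s z y else s)
           == s')%:R).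

Definition all_niches n mu (s : pop n mu) : bool :=
  [forall i : 'I_n.+1, [exists k : 'I_mu, ones (s k) == i]].

(** Sub-probability mass of being in state s at time t without having hit
    [target] at any time < t. *)
Fixpoint surv (R : realType) n mu (K : pop n mu -> pop n mu -> R)
    (target : pred (pop n mu)) (P0 : pop n mu) (t : nat) : pop n mu -> R :=
  match t with
  | 0 => fun s => (s == P0)%:R
  | t'.+1 => fun s' =>
      \sum_(s : pop n mu | ~~ target s) surv K target P0 t' s * K s s'
  end.

(** P(T > t) where T is the hitting time of [target]. *)
Definition tail_prob (R : realType) n mu (K : pop n mu -> pop n mu -> R)
    (target : pred (pop n mu)) (P0 : pop n mu) (t : nat) : R :=
  \sum_(s : pop n mu | ~~ target s) surv K target P0 t s.

(** E[T] = sum_{t >= 0} P(T > t), in the extended reals (+oo allowed). *)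
Definition expected_hitting_time (R : realType) n mu
    (K : pop n mu -> pop n mu -> R) (target : pred (pop n mu))
    (P0 : pop n mu) : \bar R :=
  (\sum_(0 <= t <oo) (tail_prob K target P0 t)%:E)%E.

(* Main.v *)
Require Import Defs.
From HB Require Import structures.
From mathcomp Require Import all_boot all_order all_algebra fingroup perm.
From mathcomp Require Import boolp classical_sets reals ereal topology normedtype sequences.
From mathcomp Require Import zify ring lra.
Import Order.TTheory GRing.Theory Num.Theory.
Local Open Scope ring_scope.

Section Hit.
Variables (R : realType) (n mu : nat) (K : pop n mu -> pop n mu -> R)
  (target : pred (pop n mu)) (I : pred (pop n mu)) (h : pop n mu -> R) (P0 : pop n mu).
Hypotheses (K0 : forall s s', 0 <= K s s') (h0 : forall s, 0 <= h s)
  (KI : forall s s', I s -> ~~ target s -> K s s' != 0 -> I s')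
  (drift : forall s, I s -> ~~ target s -> \sum_s' K s s' * h s' <= h s - 1)
  (IP0 : I P0).

Lemma surv_ge0 t s : 0 <= surv K target P0 t s.
Proof.
elim: t s => [|t IH] s /=; first by rewrite ler0n.
by apply: sumr_ge0 => s0 _; apply: mulr_ge0.
Qed.

Lemma surv_I t s : surv K target P0 t s != 0 -> I s.
Proof.
elim: t s => [|t IH] s /=; first by case E: (s == P0); [move/eqP: E => ->|rewrite eqxx].
move=> H; have [[s0 Hs0 Hne]|Hn] := pselect (exists2 s0, ~~ target s0 & surv K target P0 t s0 * K s0 s != 0); last first.
  by move: H; rewrite big1 ?eqxx // => s0 Ht; apply/eqP/negPn/negP => Hne; apply: Hn; exists s0.
move: Hne; rewrite mulf_eq0 negb_or => /andP[H1 H2].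
exact: (KI _ _ (IH _ H1) Hs0 H2).
Qed.

Definition V t := \sum_(s | ~~ target s) surv K target P0 t s * h s.

Lemma V_step t : V t.+1 + tail_prob K target P0 t <= V t.
Proof.
rewrite /V /tail_prob /=.
under eq_bigr do rewrite mulr_suml.
rewrite exchange_big /=.
rewrite -big_split /=; apply: ler_sum => s Hs.
have [/eqP ->|Hne] := boolP (surv K target P0 t s == 0).
  by rewrite big1 ?add0r ?mul0r // => s' _; rewrite !mul0r.
have Is := @surv_I t s Hne.
have S0 := surv_ge0 t s.
under eq_bigr do rewrite -mulrA.
rewrite -mulr_sumr.
apply: (@le_trans _ _ (surv K target P0 t s * (h s - 1) + surv K target P0 t s)); last by rewrite mulrBr mulr1 subrK.
rewrite lerD2r; apply: ler_wpM2l => //.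
apply: le_trans _ (drift _ Is Hs).
rewrite [X in _ <= X](bigID (fun s' => ~~ target s')) /= lerDl.
by apply: sumr_ge0 => s' _; apply: mulr_ge0.
Qed.

Lemma V_bound N : \sum_(0 <= t < N) tail_prob K target P0 t + V N <= V 0.
Proof.
elim: N => [|N IH]; first by rewrite big_nil add0r.
rewrite big_nat_recr //= -addrA; apply: le_trans IH; rewrite lerD2l addrC; exact: V_step.
Qed.

Lemma V0 : V 0 <= h P0.
Proof.
rewrite /V /=; case: (boolP (target P0)) => HP.
  by rewrite big1 // => s Hs; case: eqP Hs => [->|]; rewrite ?HP ?mul0r.
rewrite (bigD1 P0) //= eqxx mul1r big1 ?addr0 // => s /andP[_ /negbTE ->]; by rewrite mul0r.
Qed.

Lemma tail_ge0 t : 0 <= tail_prob K target P0 t.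
Proof. by apply: sumr_ge0 => s _; apply: surv_ge0. Qed.

Lemma V_ge0 t : 0 <= V t.
Proof. by apply: sumr_ge0 => s _; apply: mulr_ge0; [apply: surv_ge0|]. Qed.

Lemma hit_bound : (expected_hitting_time K target P0 <= (h P0)%:E)%E.
Proof.
rewrite /expected_hitting_time.
apply: lime_le; first by apply: is_cvg_nneseries => k _ _; rewrite lee_fin tail_ge0.
near=> N; rewrite sumEFin lee_fin.
apply: le_trans (V0); apply: le_trans (V_bound N); rewrite lerDl; exact: V_ge0.
Unshelve. all: by end_near.
Qed.
End Hit.

Section Clear.
Variables (R : realType) (T : Type) (m : nat) (dist : T -> T -> nat) (sigma kappa : nat)
  (g : T -> nat) (Ps : 'I_m -> T).
Hypothesis Hd : forall a b, (dist a b < sigma)%N = (g a == g b).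

Notation CI := (@clear_inner R T m dist sigma kappa Ps).
Notation CO := (@clear_outer R T m dist sigma kappa Ps).

Lemma inner_val xi js w (cur : 'I_m -> R) k : CI xi js w cur k = cur k \/ CI xi js w cur k = 0.
Proof.
elim: js w cur => [|j js IH] w cur /=; first by left.
case: ifP => _; last exact: IH.
case: ifP => _; first exact: IH.
case: (IH w (fun k => if k == j then 0 else cur k)) => ->; last by right.
by case: eqP; [right|left].
Qed.

Lemma inner_notin xi js w (cur : 'I_m -> R) k : k \notin js -> CI xi js w cur k = cur k.
Proof.
elim: js w cur => [|j js IH] w cur //=; rewrite in_cons negb_or => /andP[Hkj Hk].
case: ifP => _; last exact: IH.
case: ifP => _; first exact: IH.
by rewrite IH // (negbTE Hkj).
Qed.

Lemma inner_key xi js w (cur : 'I_m -> R) k : g (Ps k) != g xi -> CI xi js w cur k = cur k.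
Proof.
move=> Hk; elim: js w cur => [|j js IH] w cur //=.
case: ifP => H; last exact: IH.
case: ifP => _; first exact: IH.
rewrite IH; case: eqP => // E; move: H; rewrite Hd -E eq_sym.
by rewrite (negbTE Hk) andbF.
Qed.

Lemma inner_count xi js w (cur : 'I_m -> R) : uniq js ->
  (count (fun k => (g (Ps k) == g xi) && (0 < CI xi js w cur k)%R) js <= kappa - w)%N.
Proof.
elim: js w cur => [|j js IH] w cur //= /andP[Hj Hu].
case: ifP => H.
  move: H => /andP[Hc]; rewrite Hd eq_sym => Hg.
  case: ifP => Hw.
    rewrite inner_notin // Hg Hc /= add1n.
    have := IH w.+1 cur Hu; rewrite subnS => H'.
    by rewrite -(prednK (n:=kappa - w)) ?subn_gt0 // ltnS.
  rewrite inner_notin // eqxx ltxx andbF add0n.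
  apply: leq_trans (IH _ _ Hu) _; exact: leqnn.
rewrite inner_notin //; move: H; rewrite Hd eq_sym andbC => ->; rewrite add0n; exact: IH.
Qed.

Lemma outer_val Ls (cur : 'I_m -> R) k : CO Ls cur k = cur k \/ CO Ls cur k = 0.
Proof.
elim: Ls cur => [|i Ls IH] cur /=; first by left.
case: ifP => _; last exact: IH.
case: (IH (CI (Ps i) Ls 1 cur)) => ->; last by right.
exact: inner_val.
Qed.

Lemma outer_notin Ls (cur : 'I_m -> R) k : k \notin Ls -> CO Ls cur k = cur k.
Proof.
elim: Ls cur => [|i Ls IH] cur //=; rewrite in_cons negb_or => /andP[Hki Hk].
case: ifP => _; last exact: IH.
by rewrite IH // inner_notin.
Qed.

Lemma outer_win Ls (cur : 'I_m -> R) k : uniq Ls -> k \in Ls -> 0 < cur k ->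
  exists2 k', k' \in Ls & (g (Ps k') == g (Ps k)) && (0 < CO Ls cur k').
Proof.
elim: Ls cur => [|i Ls IH] cur //= /andP[Hi Hu]; rewrite in_cons => Hk Hc.
case: ifP => Hci.
  case: (eqVneq (g (Ps i)) (g (Ps k))) => Hg.
    exists i; first by rewrite mem_head.
    by rewrite Hg eqxx /= outer_notin // inner_notin.
  have Hk' : k \in Ls by case/orP: Hk => // /eqP E; move: Hg; rewrite E eqxx.
  have Hc1 : 0 < CI (Ps i) Ls 1 cur k by rewrite inner_key // eq_sym.
  have [k' Hk'1 Hk'2] := IH (CI (Ps i) Ls 1 cur) Hu Hk' Hc1.
  by exists k' => //; rewrite in_cons Hk'1 orbT.
have Hk' : k \in Ls by case/orP: Hk => // /eqP E; move: Hci; rewrite -E Hc.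
have [k' Hk'1 Hk'2] := IH cur Hu Hk' Hc.
by exists k' => //; rewrite in_cons Hk'1 orbT.
Qed.
Lemma outer_count Ls (cur : 'I_m -> R) v : uniq Ls -> (0 < kappa)%N ->
  (count (fun k => (g (Ps k) == v) && (0 < CO Ls cur k)%R) Ls <= kappa)%N.
Proof.
move=> + Hk; elim: Ls cur => [|i Ls IH] cur //= /andP[Hi Hu].
case: ifP => Hci; last first.
  by rewrite outer_notin // Hci andbF add0n; apply: IH.
rewrite outer_notin // inner_notin // Hci andbT.
case: eqP => Hv; last by rewrite add0n; apply: IH.
rewrite add1n.
apply: (@leq_ltn_trans (count (fun k => (g (Ps k) == g (Ps i)) && (0 < CI (Ps i) Ls 1 cur k)%R) Ls)).
  apply: sub_count => k /andP[/eqP Hg Hp]; rewrite Hg Hv eqxx /=.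
  by case: (outer_val Ls (CI (Ps i) Ls 1 cur) k) Hp => <-; rewrite ?ltxx.
apply: leq_ltn_trans (inner_count _ _ 1 cur Hu) _.
by rewrite subn1 prednK.
Qed.
End Clear.

Lemma pheno_lt1 n (x y : bits n) : (pheno_dist x y < 1)%N = (ones x == ones y).
Proof. by rewrite /pheno_dist ltnS leqn0 addn_eq0 !subn_eq0 -eqn_leq. Qed.

Section CF.
Variables (R : realType) (n m kappa : nat) (fit : bits n -> R) (srt : {perm 'I_m})
  (Ps : 'I_m -> bits n).
Hypothesis fit_pos : forall x, 0 < fit x.
Notation cf := (cleared_fitness fit (@pheno_dist n) 1 kappa srt Ps).
Let Ls := [seq srt k | k <- enum 'I_m].

Lemma Ls_uniq : uniq Ls.
Proof. by rewrite map_inj_uniq ?enum_uniq //; exact: perm_inj. Qed.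

Lemma Ls_mem k : k \in Ls.
Proof. by apply/mapP; exists (srt^-1 k)%g; rewrite ?mem_enum ?permKV. Qed.

Lemma cf_val k : cf k = fit (Ps k) \/ cf k = 0.
Proof. exact: outer_val. Qed.

Lemma cf_ge0 k : 0 <= cf k.
Proof. by case: (cf_val k) => ->; [apply: ltW|]. Qed.

Lemma cf_win k : exists2 k', ones (Ps k') = ones (Ps k) & 0 < cf k'.
Proof.
have [k' _ /andP[/eqP H1 H2]] := @outer_win R _ m _ 1 kappa (@ones n) Ps (@pheno_lt1 n) Ls (fun j => fit (Ps j)) k Ls_uniq (Ls_mem k) (fit_pos (Ps k)).
by exists k'.
Qed.

Lemma cf_count v : (0 < kappa)%N ->
  (\sum_(k | (ones (Ps k) == v) && (0 < cf k)%R) 1 <= kappa)%N.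
Proof.
move=> Hk; have := @outer_count R _ m _ 1 kappa (@ones n) Ps (@pheno_lt1 n) Ls (fun j => fit (Ps j)) v Ls_uniq Hk.
rewrite -sum1_count (perm_big (index_enum 'I_m)) //.
by apply: uniq_perm; rewrite ?index_enum_uniq ?Ls_uniq // => x; rewrite Ls_mem mem_index_enum.
Qed.
End CF.

Set Implicit Arguments. Unset Strict Implicit.

Definition present n mu (s : pop n mu) (v : nat) := [exists k, ones (s k) == v].

Lemma ones_le n (x : bits n) : (ones x <= n)%N.
Proof. by rewrite /ones -[X in (_ <= X)%N](size_tuple x) count_size. Qed.

Lemma popstar_lift n mu (s : pop n mu) y k : popstar s y (lift ord_max k) = s k.
Proof. by rewrite /popstar ffunE liftK. Qed.

Lemma popstar_max n mu (s : pop n mu) y : popstar s y ord_max = y.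
Proof. by rewrite /popstar ffunE unlift_none. Qed.

Lemma sum_eq1 n x : (x <= n)%N -> (\sum_(v < n.+1) (x == v :> nat) = 1)%N.
Proof.
move=> Hx; rewrite (bigD1 (inord x)) //= inordK ?ltnS // eqxx big1 // => v Hv.
by apply/eqP; rewrite eqb0; apply: contra Hv => /eqP ->; apply/eqP/val_inj; rewrite /= inordK.
Qed.

Section Step.
Variables (R : realType) (n mu kappa : nat) (u : nat -> R)
  (srt : {ffun 'I_mu.+1 -> bits n} -> {perm 'I_mu.+1}) (s : pop n mu).
Hypotheses (u_pos : forall i, (i <= n)%N -> 0 < u i) (Hk : (0 < kappa)%N)
  (Hmu : (n.+1 * kappa <= mu)%N) (Hs : ~~ all_niches s).

Lemma not_all_lifts (cfl : 'I_mu -> bool) :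
  (forall v : nat, (\sum_(k | (ones (s k) == v) && cfl k) 1 <= kappa)%N) -> exists k, ~~ cfl k.
Proof.
move=> Hb; have [//|Hall] := pselect (exists k, ~~ cfl k).
have Hc : forall k, cfl k by move=> k; apply/negPn/negP => H; apply: Hall; exists k.
move: Hs; rewrite /all_niches negb_forall => /existsP [v0]; rewrite negb_exists => /forallP Hv0.
have : (mu <= n * kappa)%N.
  rewrite -[X in (X <= _)%N]card_ord -sum1_card.
  rewrite (eq_bigr (fun k => \sum_(v < n.+1) (ones (s k) == v :> nat))%N); last first.
    by move=> k _; rewrite sum_eq1 // ones_le.
  rewrite exchange_big /= (bigD1 v0) //=.
  rewrite big1; last by move=> k _; apply/eqP; rewrite eqb0; apply: Hv0.
  have -> : (n * kappa = \sum_(v in predC1 v0) kappa)%N by rewrite sum_nat_const cardC1 card_ord.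
  rewrite add0n.
  apply: leq_sum => v Hv; apply: leq_trans (Hb v).
  by rewrite [X in (_ <= X)%N]big_mkcond /=; apply: leq_sum => k _; rewrite Hc andbT; case: eqP.
move=> H; exfalso; lia.
Qed.

Let fit := fun x : bits n => u (ones x).
Lemma fit_pos x : 0 < fit x.
Proof. exact: u_pos _ (ones_le x). Qed.

Lemma step (y : bits n) (z : 'I_mu) :
  let Ps := popstar s y in
  let cf := cleared_fitness fit (@pheno_dist n) 1 kappa (srt Ps) Ps in
  (forall k', cf (lift ord_max z) <= cf (lift ord_max k')) ->
  let s' := if cf (lift ord_max z) <= cf ord_max then replace_at s z y else s in
  (forall v, present s v -> present s' v) /\ present s' (ones y).
Proof.
move=> Ps cf Hz s'.
have cfz : cf (lift ord_max z) = 0.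
  case: (@cf_val R n mu.+1 kappa fit (srt Ps) Ps (lift ord_max z)) => // Hpos.
  have Hpz : 0 < cf (lift ord_max z) by rewrite /cf Hpos fit_pos.
  suff [k Hk'] : exists k, ~~ (0 < cf (lift ord_max k)).
    by move: Hk'; rewrite (lt_le_trans Hpz (Hz k)).
  apply: not_all_lifts => v; apply: leq_trans (@cf_count R n mu.+1 kappa fit (srt Ps) Ps v Hk).
  rewrite [X in (_ <= X)%N]big_mkcond big_ord_recr /= big_mkcond /=.
  apply: leq_trans (leq_addr _ _); apply: leq_sum => k _.
  have -> : widen_ord (leqnSn mu) k = lift ord_max k by apply/val_inj; rewrite /= /bump leqNgt ltn_ord.
  by rewrite /Ps popstar_lift.
have Hs' : s' = replace_at s z y by rewrite /s' cfz (@cf_ge0 R n mu.+1 kappa fit (srt Ps) Ps fit_pos).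
rewrite Hs'; split; last by apply/existsP; exists z; rewrite /replace_at ffunE eqxx.
move=> v /existsP [k /eqP Hkv].
case: (eqVneq k z) => [Ekz|Hkz]; last first.
  by apply/existsP; exists k; rewrite /replace_at ffunE (negbTE Hkz) Hkv.
have [k' Hk'1 Hk'2] := @cf_win R n mu.+1 kappa fit (srt Ps) Ps fit_pos (lift ord_max z).
case: (unliftP ord_max k') Hk'1 Hk'2 => [j ->|->] Hk'1 Hk'2.
  have Hjz : j != z by apply: contraTneq Hk'2 => E; rewrite E; move: cfz; rewrite /cf => ->; rewrite ltxx.
  apply/existsP; exists j; rewrite /replace_at ffunE (negbTE Hjz).
  by move: Hk'1; rewrite /Ps !popstar_lift -Ekz Hkv => ->.
apply/existsP; exists z; rewrite /replace_at ffunE eqxx.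
by move: Hk'1; rewrite /Ps popstar_lift popstar_max -Ekz Hkv => ->.
Qed.
End Step.

Lemma sum_bool n (P : pred 'I_n) : (\sum_i (P i : nat) = #|[set i | P i]|)%N.
Proof. by rewrite -sum1dep_card [RHS]big_mkcond; apply: eq_bigr => i _; case: (P i). Qed.

Lemma ones_card n (x : bits n) : ones x = #|[set i | tnth x i]|.
Proof. by rewrite /ones -sum1_count big_tuple sum1dep_card. Qed.

Lemma prod_if (R : realType) n (P : pred 'I_n) (a b : R) :
  \prod_i (if P i then a else b) = a ^+ #|[set i | P i]| * b ^+ (n - #|[set i | P i]|).
Proof.
rewrite (bigID P) /=.
rewrite (eq_bigr (fun=> a)); last by move=> i ->.
rewrite [X in _ * X](eq_bigr (fun=> b)); last by move=> i /negbTE ->.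
rewrite !prodr_const; congr (_ ^+ _ * _ ^+ _); first by apply: eq_card => i; rewrite inE.
have := cardC [set i | P i]; rewrite card_ord => E.
have -> : #|(fun i => ~~ P i)| = #|[predC [set i | P i]]| by apply: eq_card => i; rewrite !inE.
apply: (@addnI #|[set i | P i]|); rewrite E subnKC //.
by have := max_card [set i | P i]; rewrite card_ord.
Qed.

Lemma mut_prod (R : realType) n (x y : bits n) : mut_prob R x y =
  \prod_i (if tnth x i != tnth y i then n%:R^-1 else 1 - n%:R^-1).
Proof. by rewrite prod_if /mut_prob /hamming sum_bool. Qed.

Lemma inv_n_le1 (R : realType) n : (0 < n)%N -> 0 <= n%:R^-1 :> R /\ n%:R^-1 <= 1 :> R.
Proof.
move=> Hn; rewrite invr_ge0 ler0n invf_le1 ?ltr0n // ler1n.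
by [].
Qed.

Lemma mut_ge0 (R : realType) n (x y : bits n) : (0 < n)%N -> 0 <= mut_prob R x y.
Proof.
move=> /(inv_n_le1 R) [H0 H1].
by rewrite /mut_prob mulr_ge0 // exprn_ge0 // subr_ge0.
Qed.

Definition ffun_of_bits n (y : bits n) : {ffun 'I_n -> bool} := [ffun i => tnth y i].
Definition bits_of_ffun n (f : {ffun 'I_n -> bool}) : bits n := [tuple f i | i < n].

Lemma mut_sum (R : realType) n (x : bits n) : \sum_y mut_prob R x y = 1.
Proof.
rewrite (reindex (@bits_of_ffun n)) /=; last first.
  exists (@ffun_of_bits n) => f _; first by apply/ffunP => i; rewrite ffunE tnth_mktuple.
  by apply: eq_from_tnth => i; rewrite tnth_mktuple ffunE.
under eq_bigr do rewrite mut_prod.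
under eq_bigr do under eq_bigr do rewrite tnth_mktuple.
rewrite -(bigA_distr_bigA (fun i c => if tnth x i != c then n%:R^-1 else 1 - n%:R^-1 : R)) /=.
apply: big1 => i _.
rewrite big_bool /=; case: (tnth x i) => /=; [by rewrite subrK|by rewrite addrC subrK].
Qed.

Definition flip n (x : bits n) (j : 'I_n) : bits n :=
  [tuple (if i == j then ~~ tnth x i else tnth x i) | i < n].

Lemma tnth_flip n (x : bits n) j i : tnth (flip x j) i = if i == j then ~~ tnth x i else tnth x i.
Proof. by rewrite tnth_mktuple. Qed.

Lemma ham_flip n (x : bits n) j : hamming x (flip x j) = 1%N.
Proof.
rewrite /hamming (bigD1 j) //= tnth_flip eqxx big1 ?addn0; first by case: (tnth x j).
by move=> i /negbTE Hi; rewrite tnth_flip Hi eqxx.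
Qed.

Lemma mut_flip (R : realType) n (x : bits n) j :
  mut_prob R x (flip x j) = n%:R^-1 * (1 - n%:R^-1) ^+ (n - 1).
Proof. by rewrite /mut_prob ham_flip expr1. Qed.

Lemma ones_sum n (x : bits n) : ones x = (\sum_i (tnth x i : nat))%N.
Proof. by rewrite ones_card sum_bool. Qed.

Lemma ones_flip n (x : bits n) j : (ones (flip x j) + tnth x j = ones x + ~~ tnth x j)%N.
Proof.
rewrite !ones_sum (bigD1 j) //= [X in (_ = X + _)%N](bigD1 j) //= tnth_flip eqxx.
rewrite (eq_bigr (fun i => (tnth x i : nat))); last by move=> i /negbTE Hi; rewrite tnth_flip Hi.
lia.
Qed.

Lemma flip_inj n (x : bits n) : injective (flip x).
Proof.
move=> j j' E; have := congr1 (fun y => tnth y j) E; rewrite !tnth_flip eqxx.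
by case: eqP => // _; case: (tnth x j).
Qed.

Lemma flip_mass (R : realType) n (x : bits n) (c : bool) t : (0 < n)%N ->
  (forall j, tnth x j = c -> ones (flip x j) = t) ->
  #|[set j | tnth x j == c]|%:R * (n%:R^-1 * (1 - n%:R^-1) ^+ (n - 1)) <=
  \sum_(y | ones y == t) mut_prob R x y.
Proof.
move=> Hn Ht.
rewrite (bigID (mem [set flip x j | j in [set j | tnth x j == c]])) /=.
rewrite -[X in X <= _]addr0; apply: lerD; last by apply: sumr_ge0 => y _; apply: mut_ge0.
rewrite (eq_bigl (mem [set flip x j | j in [set j | tnth x j == c]])); last first.
  move=> y /=; apply/andP/idP => [[]//|Hy]; split => //.
  by case/imsetP: Hy => j; rewrite inE => /eqP /Ht <- ->.
rewrite big_imset /=; last by move=> j j' _ _; apply: flip_inj.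
under eq_bigr do rewrite mut_flip.
by rewrite sumr_const mulr_natl.
Qed.

Lemma bernoulli (R : realType) (x : R) m : 0 <= x <= 1 -> 1 - m%:R * x <= (1 - x) ^+ m.
Proof.
move=> /andP[H0 H1]; elim: m => [|m IH]; first by rewrite mul0r subr0 expr0.
rewrite exprS.
have Hp : 0 <= (1 - x) ^+ m by rewrite exprn_ge0 // subr_ge0.
have Hx : 0 <= 1 - x by rewrite subr_ge0.
have H2 : (1 - x) * (1 - m%:R * x) <= (1 - x) * (1 - x) ^+ m by rewrite ler_wpM2l.
apply: le_trans H2; rewrite -natr1; have Hm : 0 <= m%:R :> R by rewrite ler0n.
nra.
Qed.

Lemma q_bound (R : realType) n : (0 < n)%N -> 4^-1 <= (1 - n%:R^-1) ^+ (n - 1) :> R.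
Proof.
move=> Hn.
have Hn' : (0 : R) < n%:R by rewrite ltr0n.
have Ha0 : 0 <= n%:R^-1 :> R by rewrite invr_ge0 ltW.
have Ha1 : n%:R^-1 <= 1 :> R by rewrite invf_le1 // ler1n.
have Hb0 : 0 <= 1 - n%:R^-1 :> R by rewrite subr_ge0.
have Hb1 : 1 - n%:R^-1 <= 1 :> R by rewrite lerBlDr lerDl.
apply: (@le_trans _ _ ((1 - n%:R^-1) ^+ (n./2 * 2))).
  rewrite exprM; have B := bernoulli (n./2) (x := n%:R^-1 : R).
  have Hk : (n./2)%:R * n%:R^-1 <= 2^-1 :> R.
    have H2 : (2 * n./2 <= n)%N by rewrite mul2n -{2}(odd_double_half n); lia.
    have : (2 * n./2)%:R <= n%:R :> R by rewrite ler_nat.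
    rewrite natrM ler_pdivrMr // => H; lra.
  have : 2^-1 <= (1 - n%:R^-1) ^+ n./2 :> R by apply: le_trans (B _); [lra|apply/andP].
  move=> H; rewrite expr2; nra.
apply: ler_wiXn2l => //.
rewrite muln2 -{1}(odd_double_half n); case: (odd n); lia.
Qed.

Lemma exists_min (R : realType) (T : finType) (f : T -> R) (x0 : T) :
  exists k, forall k', f k <= f k'.
Proof.
suff [k Hk] : exists k, forall k', k' \in enum T -> f k <= f k'.
  by exists k => k'; apply: Hk; rewrite mem_enum.
elim: (enum T) => [|a s [k Hk]]; first by exists x0.
case: (lerP (f a) (f k)) => H.
  exists a => k'; rewrite in_cons => /orP[/eqP ->//|/Hk]; exact: le_trans.
exists k => k'; rewrite in_cons => /orP[/eqP ->|/Hk //]; exact: ltW.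
Qed.

Lemma card_true n (x : bits n) : #|[set j | tnth x j == true]| = ones x.
Proof. by rewrite ones_card; apply: eq_card => j; rewrite !inE eqb_id. Qed.

Lemma card_false n (x : bits n) : #|[set j | tnth x j == false]| = (n - ones x)%N.
Proof.
rewrite ones_card; have := cardC [set j | tnth x j]; rewrite card_ord => E.
have -> : #|[set j | tnth x j == false]| = #|[predC [set j | tnth x j]]|.
  by apply: eq_card => j; rewrite !inE eqbF_neg.
lia.
Qed.

Lemma good_parent n mu (s : pop n mu) : present s 0 -> present s n -> ~~ all_niches s ->
  exists i0 c t, [/\ ~~ present s t, (forall j, tnth (s i0) j = c -> ones (flip (s i0) j) = t)
    & (n <= 2 * #|[set j | tnth (s i0) j == c]|)%N].
Proof.
move=> H0 Hn Hs.
have exP : exists v, (v <= n)%N && ~~ present s v.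
  move: Hs; rewrite /all_niches negb_forall => /existsP [v0 Hv0].
  by exists v0; rewrite -ltnS ltn_ord.
have ubP : forall v, (v <= n)%N && ~~ present s v -> (v <= n)%N by move=> v /andP[].
case: (ex_minnP exP) => m /andP[Hmn Hm] Hmin.
case: (ex_maxnP exP ubP) => M /andP[HMn HM] Hmax.
have Hm0 : (0 < m)%N by case: m Hm {Hmn Hmin} => //; rewrite H0.
have HmM : (m <= M)%N by apply: Hmin; rewrite HMn HM.
have HMn' : (M < n)%N by rewrite ltn_neqAle HMn andbT; apply: contraNneq HM => ->.
case: (leqP n (2 * (n - m.-1))) => Hcase.
  have : present s m.-1.
    case: (boolP (present s m.-1)) => // Hp.
    have := Hmin m.-1; rewrite Hp andbT (leq_trans (leq_pred m) Hmn) => /(_ isT); lia.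
  case/existsP => k0 /eqP Hk0.
  exists k0, false, m; split => //.
    move=> j Hj; have := ones_flip (s k0) j; rewrite Hj Hk0 /=; lia.
  by rewrite card_false Hk0.
have : present s M.+1.
  case: (boolP (present s M.+1)) => // Hp.
  have := Hmax M.+1; rewrite Hp andbT HMn' => /(_ isT); lia.
case/existsP => k1 /eqP Hk1.
exists k1, true, M; split => //.
  move=> j Hj; have := ones_flip (s k1) j; rewrite Hj Hk1 /=; lia.
by rewrite card_true Hk1; lia.
Qed.

Section Main.
Variables (R : realType) (n mu kappa : nat) (u : nat -> R)
  (srt : {ffun 'I_mu.+1 -> bits n} -> {perm 'I_mu.+1}).
Hypotheses (u_pos : forall i, (i <= n)%N -> 0 < u i) (Hk : (0 < kappa)%N)
  (Hmu : (n.+1 * kappa <= mu)%N) (Hn : (0 < n)%N).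

Let fit := fun x : bits n => u (ones x).
Let K := ea_kernel fit (@pheno_dist n) 1 kappa srt.

Definition cfP (s : pop n mu) y :=
  cleared_fitness fit (@pheno_dist n) 1 kappa (srt (popstar s y)) (popstar s y).
Definition Wset (s : pop n mu) y := [set k : 'I_mu | [forall k' : 'I_mu,
   cfP s y (lift ord_max k) <= cfP s y (lift ord_max k')]].
Definition nw (s : pop n mu) y z :=
  if cfP s y (lift ord_max z) <= cfP s y ord_max then replace_at s z y else s.

Lemma mu_gt0 : (0 < mu)%N.
Proof. lia. Qed.

Lemma kernelE s s' : K s s' = \sum_i \sum_y \sum_(z in Wset s y)
   (mu%:R^-1 * mut_prob R (s i) y * #|Wset s y|%:R^-1) * (nw s y z == s')%:R.
Proof.
rewrite /K /ea_kernel; apply: eq_bigr => i _; rewrite mulr_sumr; apply: eq_bigr => y _.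
rewrite /= mulrA mulr_sumr; apply: eq_bigr => z _; by rewrite !mulrA.
Qed.

Lemma W_card s y : (0 < #|Wset s y|)%N.
Proof.
have [k Hk'] := exists_min (fun k : 'I_mu => cfP s y (lift ord_max k)) (Ordinal mu_gt0).
by apply/card_gt0P; exists k; rewrite inE; apply/forallP.
Qed.

Lemma W_sum s y : \sum_(z in Wset s y) #|Wset s y|%:R^-1 = 1 :> R.
Proof.
have H : forall m : nat, (0 < m)%N -> (m%:R^-1 : R) *+ m = 1.
  by move=> m Hm; rewrite -[(_^-1) *+ _]mulr_natr mulVf // pnatr_eq0 -lt0n.
by rewrite sumr_const H // W_card.
Qed.

Lemma step' s y z : ~~ all_niches s -> z \in Wset s y ->
  (forall v, present s v -> present (nw s y z) v) /\ present (nw s y z) (ones y).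
Proof.
move=> Hs; rewrite inE => /forallP Hz.
exact: (@step R n mu kappa u srt s u_pos Hk Hmu Hs y z Hz).
Qed.

Definition Nset (s : pop n mu) := [set v : 'I_n.+1 | present s v].
Definition hh (s : pop n mu) : R := (n.+1 - #|Nset s|)%:R * (8 * mu)%:R.

Lemma hh_ge0 s : 0 <= hh s.
Proof. by rewrite /hh mulr_ge0 ?ler0n. Qed.

Lemma h_step s y z : ~~ all_niches s -> z \in Wset s y ->
  hh (nw s y z) + (~~ present s (ones y))%:R * (8 * mu)%:R <= hh s.
Proof.
move=> Hs Hz; have [H1 H2] := step' Hs Hz.
have Hsub : Nset s \subset Nset (nw s y z).
  by apply/fintype.subsetP => v; rewrite !inE; apply: H1.
have Hc1 := subset_leq_card Hsub.
have Hc2 : (#|Nset (nw s y z)| <= n.+1)%N by have := max_card (Nset (nw s y z)); rewrite card_ord.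
have Hc3 : (#|Nset s| + ~~ present s (ones y) <= #|Nset (nw s y z)|)%N.
  case: (boolP (present s (ones y))) => Hp; first by rewrite addn0.
  rewrite addn1; apply: proper_card; rewrite properE Hsub /=.
  apply/fintype.subsetPn; exists (inord (ones y)); rewrite !inE inordK ?ltnS ?ones_le //.
rewrite /hh -mulrDl ler_wpM2r ?ler0n // -natrD ler_nat; lia.
Qed.

Lemma w_ge0 (s : pop n mu) i y : 0 <= mu%:R^-1 * mut_prob R (s i) y * #|Wset s y|%:R^-1.
Proof. apply: mulr_ge0; [apply: mulr_ge0|]; rewrite ?invr_ge0 ?ler0n //; exact: mut_ge0. Qed.

Lemma K_ge0 s s' : 0 <= K s s'.
Proof.
rewrite kernelE; apply: sumr_ge0 => i _; apply: sumr_ge0 => y _; apply: sumr_ge0 => z _.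
by rewrite mulr_ge0 ?w_ge0 ?ler0n.
Qed.

Definition Iinv (s : pop n mu) := present s 0 && present s n.

Lemma KI s s' : Iinv s -> ~~ all_niches s -> K s s' != 0 -> Iinv s'.
Proof.
move=> /andP[H0 Hn'] Hs HK.
have [[y [z Hz <-]]|Hno] := pselect (exists y, exists2 z, z \in Wset s y & nw s y z = s').
  by have [H1 _] := step' Hs Hz; rewrite /Iinv !H1.
exfalso; move: HK; rewrite kernelE big1 ?eqxx // => i _; rewrite big1 // => y _.
rewrite big1 // => z Hz; case: eqP => [E|_]; last by rewrite mulr0.
by exfalso; apply: Hno; exists y, z.
Qed.

Lemma exp_form s : \sum_s' K s s' * hh s' = \sum_i \sum_y \sum_(z in Wset s y)
   (mu%:R^-1 * mut_prob R (s i) y * #|Wset s y|%:R^-1) * hh (nw s y z).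
Proof.
under eq_bigr do rewrite kernelE mulr_suml.
rewrite exchange_big; apply: eq_bigr => i _.
under eq_bigr do rewrite mulr_suml.
rewrite exchange_big; apply: eq_bigr => y _.
under eq_bigr do rewrite mulr_suml.
rewrite exchange_big; apply: eq_bigr => z _.
rewrite (bigD1 (nw s y z)) //= eqxx mulr1 big1 ?addr0 // => s' Hs'.
by rewrite eq_sym (negbTE Hs') mulr0 mul0r.
Qed.

Lemma drift s : Iinv s -> ~~ all_niches s -> \sum_s' K s s' * hh s' <= hh s - 1.
Proof.
move=> HI Hs; rewrite exp_form.
set c : R := (8 * mu)%:R.
pose m := fun y : bits n => (~~ present s (ones y))%:R : R.
pose S := fun i : 'I_mu => \sum_y mut_prob R (s i) y * m y.
apply: (@le_trans _ _ (\sum_(i < mu) \sum_y mu%:R^-1 * mut_prob R (s i) y * (hh s - m y * c))).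
  apply: ler_sum => i _; apply: ler_sum => y _.
  apply: (@le_trans _ _ (\sum_(z in Wset s y) (mu%:R^-1 * mut_prob R (s i) y * #|Wset s y|%:R^-1) * (hh s - m y * c))); last first.
    by rewrite -mulr_suml -mulr_sumr W_sum mulr1.
  apply: ler_sum => z Hz; apply: ler_wpM2l; first exact: w_ge0.
  by rewrite lerBrDr; exact: h_step.
have E : forall i, \sum_y mu%:R^-1 * mut_prob R (s i) y * (hh s - m y * c) =
    mu%:R^-1 * hh s - mu%:R^-1 * c * S i.
  move=> i; rewrite /S mulr_sumr -[X in _ = X - _]mulr1 -(mut_sum R (s i)) mulr_sumr -sumrB.
  by apply: eq_bigr => y _; ring.
under eq_bigr do rewrite E.
rewrite sumrB sumr_const card_ord -[_ *+ mu]mulr_natl mulrA mulfV ?mul1r; last by rewrite pnatr_eq0 -lt0n mu_gt0.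
rewrite lerD2l lerN2 -mulr_sumr.
have Hc : mu%:R^-1 * c = 8 by rewrite /c natrM mulrCA mulVf ?mulr1 // pnatr_eq0 -lt0n mu_gt0.
rewrite Hc.
have [HI0 HIn] := andP HI.
have [i0 [b [t [Ht Hflip Hcard]]]] := good_parent HI0 HIn Hs.
have S_ge0 : forall i, 0 <= S i.
  by move=> i; apply: sumr_ge0 => y _; rewrite mulr_ge0 ?ler0n ?mut_ge0.
have HS : 8^-1 <= S i0.
  apply: (@le_trans _ _ (\sum_(y | ones y == t) mut_prob R (s i0) y)); last first.
    rewrite /S [X in _ <= X](bigID (fun y => ones y == t)) /=.
    rewrite -[X in X <= _]addr0; apply: lerD.
      by apply: ler_sum => y /eqP Hy; rewrite /m Hy Ht mulr1.
    by apply: sumr_ge0 => y _; rewrite mulr_ge0 ?ler0n ?mut_ge0.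
  apply: le_trans (flip_mass R Hn Hflip).
  have Hq := q_bound R Hn.
  have HN : (0 : R) < n%:R by rewrite ltr0n.
  have HNy : n%:R * n%:R^-1 = 1 :> R by rewrite mulfV // gt_eqF.
  have Hy : (0 : R) < n%:R^-1 by rewrite invr_gt0.
  have HX : n%:R <= 2 * #|[set j | tnth (s i0) j == b]|%:R :> R.
    by rewrite -natrM ler_nat.
  set X := #|[set j | tnth (s i0) j == b]|%:R in HX *.
  set y := n%:R^-1 in HNy Hy Hq *.
  set q := (1 - y) ^+ (n - 1) in Hq *.
  have XY : 2^-1 <= X * y by nra.
  nra.
have : S i0 <= \sum_i S i by rewrite (bigD1 i0) //= lerDl sumr_ge0.
move=> H; nra.
Qed.
End Main.

Unset Implicit Arguments. Set Strict Implicit.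
Theorem lemma3 (R : realType) :
  exists (C : R) (n0 : nat),
  forall (n : nat) (u : nat -> R) (kappa mu : nat)
         (srt : {ffun 'I_mu.+1 -> bits n} -> {perm 'I_mu.+1})
         (P0 : pop n mu),
    (n0 <= n)%N ->
    (forall i, (i <= n)%N -> 0 < u i) ->
    (1 <= kappa)%N ->
    (n.+1 * kappa <= mu)%N ->
    sorts_by_fitness (fun x => u (ones x)) srt ->
    (exists k, P0 k = zeros_str n) ->
    (exists k, P0 k = ones_str n) ->
    (expected_hitting_time
       (ea_kernel (fun x => u (ones x)) (@pheno_dist n) 1 kappa srt)
       (@all_niches n mu) P0
     <= (C * mu%:R * n%:R)%:E)%E.
Proof.
exists 16, 1%N => n u kappa mu srt P0 Hn0 Hu Hk Hmu _ [k0 Hk0] [k1 Hk1].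
apply: (@le_trans _ _ ((@hh R n mu P0)%:E)).
  apply: (@hit_bound R n mu _ _ (@Iinv n mu) (@hh R n mu) P0).
  - by move=> s s'; apply: K_ge0.
  - by move=> s; apply: hh_ge0.
  - by move=> s s'; apply: KI.
  - by move=> s; apply: drift.
  - apply/andP; split; apply/existsP; [exists k0|exists k1]; rewrite ?Hk0 ?Hk1 ones_sum.
      by rewrite big1 // => i _; rewrite tnth_mktuple.
    by rewrite (eq_bigr (fun=> 1%N)) ?sum1_card ?card_ord // => i _; rewrite tnth_mktuple.
rewrite lee_fin /hh.
have H1 : ((n.+1 - #|Nset P0|)%:R : R) <= n.+1%:R by rewrite ler_nat leq_subr.
have H2 : (n.+1%:R : R) <= 2 * n%:R by rewrite -natrM ler_nat; lia.
rewrite natrM.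
have Hm : (0 : R) <= mu%:R by rewrite ler0n.
nra.
Qed.
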